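(* Let $J$ be an ordinal, anonymous and neutral randomized mechanism for the unit-range normalization with $n$ agents and $n$ items, and let $\epsilon>0$. Then $$ar(J) = \inf_{\mathbf u\in C_\epsilon^n} \frac{\mathbb E[\sum_{i=1}^n u_i(J(\mathbf u)_i)]}{w^*(\mathbf u)}.$$
   Context: Agents $N=\{1,\dots,n\}$, items $M=\{1,\dots,n\}$, outcomes are bijections $\mu$ ($O$ the set of outcomes). Unit-range valuation functions: injective $u:M\to\mathbb R$ with $\max_j u(j)=1$ and $\min_j u(j)=0$; $V$ is the set of these, $V^n$ the set of profiles. A randomized mechanism $J$ maps each profile to a distribution over $O$. $J$ is ordinal if its output distribution is unchanged when one agent's valuation function is replaced by another inducing the same ordering of items. $J$ is anonymous if for every permutation $\pi$ of agents, with $\mathbf u^\pi=(u_{\pi(1)},\dots,u_{\pi(n)})$, $(J(\mathbf u^\pi)_k)_k$ has the same distribution as $(J(\mathbf u)_{\pi(k)})_k$. $J$ is neutral if for every permutation $\sigma$ of items, with $\mathbf u\circ\sigma=(u_1\circ\sigma,\dots,u_n\circ\sigma)$, $(\sigma(J(\mathbf u\circ\sigma)_i))_i$ has the same distribution as $(J(\mathbf u)_i)_i$. $w^*(\mathbf u)=\max_{\mu\in O}\sum_i u_i(\mu_i)$, and $ar(J)=\inf_{\mathbf u\in V^n}\mathbb E[\sum_i u_i(J(\mathbf u)_i)]/w^*(\mathbf u)$. The quasi-combinatorial valuation functions are $C_\epsilon=\{u\in V : u(M)\subseteq[0,\epsilon)\cup(1-\epsilon,1]\}$, and $C_\epsilon^n$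 is the set of profiles all of whose valuation functions lie in $C_\epsilon$. *)

(* Defs.v *)
From Stdlib Require Import Reals.
From mathcomp Require Import all_boot.
From mathcomp Require Import fingroup perm.

Set Implicit Arguments.
Unset Strict Implicit.
Unset Printing Implicit Defensive.

Local Open Scope R_scope.

(* Agents and items are both 'I_n.  An outcome is a bijection agents -> items. *)
Notation outcome n := {perm 'I_n}.

Definition valuation (n : nat) := 'I_n -> R.
Definition profile (n : nat) := 'I_n -> valuation n.

Definition unit_range (n : nat) (u : valuation n) : Prop :=
  injective u /\
  (exists j, u j = 1) /\ (forall j, u j <= 1) /\
  (exists j, u j = 0) /\ (forall j, 0 <= u j).

Definition in_Vn (n : nat) (p : profile n) : Prop :=
  forall i, unit_range (p i).

Definition quasi_comb (n : nat) (eps : R) (u : valuation n) : Prop :=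
  unit_range u /\ forall j, (0 <= u j < eps) \/ (1 - eps < u j <= 1).

Definition in_Cn (n : nat) (eps : R) (p : profile n) : Prop :=
  forall i, quasi_comb eps (p i).

(* A randomized mechanism: maps a profile to a function giving the
   probability of each outcome. *)
Definition mechanism (n : nat) := profile n -> outcome n -> R.

Definition is_distribution (n : nat) (d : outcome n -> R) : Prop :=
  (forall mu, 0 <= d mu) /\ \big[Rplus/0]_(mu : outcome n) d mu = 1.

Definition randomized_mechanism (n : nat) (J : mechanism n) : Prop :=
  forall p, in_Vn p -> is_distribution (J p).

Definition replace_agent (n : nat) (p : profile n) (i : 'I_n) (v : valuation n)
  : profile n := fun k => if k == i then v else p k.

Definition same_ordering (n : nat) (u v : valuation n) : Prop :=
  forall j k, u j < u k <-> v j < v k.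

Definition ordinal_mech (n : nat) (J : mechanism n) : Prop :=
  forall p i v, in_Vn p -> unit_range v -> same_ordering (p i) v ->
    J (replace_agent p i v) = J p.

(* Anonymity: (J(u^pi)_k)_k ~ (J(u)_{pi k})_k, i.e. the probability of nu under
   J(u^pi) equals the probability under J(u) of the mu with mu (pi k) = nu k. *)
Definition anonymous_mech (n : nat) (J : mechanism n) : Prop :=
  forall p (pi : {perm 'I_n}) (nu mu : outcome n), in_Vn p ->
    (forall k, mu (pi k) = nu k) ->
    J (fun k => p (pi k)) nu = J p mu.

(* Neutrality: (sigma(J(u o sigma)_i))_i ~ (J(u)_i)_i. *)
Definition neutral_mech (n : nat) (J : mechanism n) : Prop :=
  forall p (sigma : {perm 'I_n}) (nu mu : outcome n), in_Vn p ->
    (forall i, mu i = sigma (nu i)) ->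
    J (fun i j => p i (sigma j)) nu = J p mu.

Definition welfare (n : nat) (p : profile n) (mu : outcome n) : R :=
  \big[Rplus/0]_(i < n) p i (mu i).

Definition exp_welfare (n : nat) (J : mechanism n) (p : profile n) : R :=
  \big[Rplus/0]_(mu : outcome n) (J p mu * welfare p mu).

(* Optimal welfare w*(u); on V^n all welfares are >= 0, so 0 is a neutral
   starting value for the maximum. *)
Definition opt_welfare (n : nat) (p : profile n) : R :=
  \big[Rmax/0]_(mu : outcome n) welfare p mu.

Definition ratio (n : nat) (J : mechanism n) (p : profile n) : R :=
  exp_welfare J p / opt_welfare p.

Definition is_inf (S : R -> Prop) (m : R) : Prop :=
  (forall x, S x -> m <= x) /\ (forall b, (forall x, S x -> b <= x) -> b <= m).

Definition is_ar (n : nat) (J : mechanism n) (m : R) : Prop :=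
  is_inf (fun r => exists p, in_Vn p /\ r = ratio J p) m.

(* Main.v *)
Require Import Defs.
From Stdlib Require Import Reals.
From mathcomp Require Import all_boot.
From mathcomp Require Import fingroup perm.
From Stdlib Require Import Lra Classical FunctionalExtensionality.

Local Open Scope R_scope.

Section Aux.
Variable T : finType.

Lemma sum_ge0 (F : T -> R) : (forall x, 0 <= F x) -> 0 <= \big[Rplus/0]_(x : T) F x.
Proof. move=> H; apply: big_ind => //; [lra| move=> a b; lra]. Qed.

Lemma sum_lin (F G : T -> R) (c d : R) :
  \big[Rplus/0]_(x : T) (c * F x + d * G x) =
  c * \big[Rplus/0]_(x : T) F x + d * \big[Rplus/0]_(x : T) G x.
Proof.
apply: (big_ind3 (fun a b z => z = c * a + d * b)).
- ring.
- move=> x1 x2 x3 y1 y2 y3 -> ->; ring.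
- by [].
Qed.

Lemma sum_le (F G : T -> R) : (forall x, F x <= G x) ->
  \big[Rplus/0]_(x : T) F x <= \big[Rplus/0]_(x : T) G x.
Proof.
move=> H; apply: (big_ind2 (fun a b => a <= b)) => //; [lra|move=> *; lra].
Qed.

Lemma max_ge (F : T -> R) x0 : F x0 <= \big[Rmax/0]_(x : T) F x.
Proof.
have: x0 \in index_enum T by apply: mem_index_enum.
elim: (index_enum T) => [//|y s IH].
rewrite in_cons big_cons /= => /orP [/eqP ->|/IH H].
- apply: Rmax_l.
- apply: Rle_trans H _; apply: Rmax_r.
Qed.

Lemma max_le (F : T -> R) B : 0 <= B -> (forall x, F x <= B) ->
  \big[Rmax/0]_(x : T) F x <= B.
Proof.
move=> H0 H; apply: (big_ind (fun z => z <= B)) => //.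
move=> a b Ha Hb; by apply: Rmax_lub.
Qed.
End Aux.
Arguments sum_ge0 {T}.
Arguments sum_lin {T}.
Arguments sum_le {T}.
Arguments max_ge {T}.
Arguments max_le {T}.

Lemma sum_ge_term (T : finType) (F : T -> R) x0 : (forall x, 0 <= F x) ->
  F x0 <= \big[Rplus/0]_(x : T) F x.
Proof.
move=> H0.
have: x0 \in index_enum T by apply: mem_index_enum.
elim: (index_enum T) => [//|y s IH].
rewrite in_cons big_cons /= => /orP [/eqP ->|/IH H].
- have : 0 <= \big[Rplus/0]_(j <- s) F j.
    by apply: big_ind => //; [lra|move=> a b; lra].
  lra.
- have := H0 y; lra.
Qed.

Section Main.
Variable n : nat.
Variable J : mechanism n.
Hypothesis HJ : randomized_mechanism J.
Hypothesis Hord : ordinal_mech J.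

Lemma repl_V (p : profile n) i v : in_Vn p -> unit_range v ->
  in_Vn (replace_agent p i v).
Proof. move=> Hp Hv k; rewrite /replace_agent; by case: (k == i). Qed.

Lemma welfare_ge0 (q : profile n) mu : in_Vn q -> 0 <= welfare q mu.
Proof.
move=> Hq; apply: sum_ge0 => k.
by case: (Hq k) => _ [_ [_ [_ H]]].
Qed.

Lemma le_opt (q : profile n) mu : welfare q mu <= opt_welfare q.
Proof. exact: (max_ge (fun mu => welfare q mu) mu). Qed.

Lemma opt_pos (q : profile n) (i : 'I_n) : in_Vn q -> 0 < opt_welfare q.
Proof.
move=> Hq.
case: (Hq i) => _ [[j Hj] _].
have H1 : q i (tperm i j i) <= welfare q (tperm i j).
  rewrite /welfare; have := (@sum_ge_term _ (fun k => q k (tperm i j k)) i); apply => k.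
  by case: (Hq k) => _ [_ [_ [_ H]]].
rewrite tpermL Hj in H1.
have := max_ge (fun mu => welfare q mu) (tperm i j).
rewrite /opt_welfare /= => H2; apply: (Rlt_le_trans _ _ _ _ H2); lra.
Qed.

Lemma exp_ge0 (q : profile n) : in_Vn q -> 0 <= exp_welfare J q.
Proof.
move=> Hq; apply: sum_ge0 => mu.
apply: Rmult_le_pos; last by apply: welfare_ge0.
by case: (HJ q Hq) => H _; apply: H.
Qed.

Lemma qc_step (p : profile n) i x x1 x2 c : in_Vn p ->
  unit_range x -> unit_range x1 -> unit_range x2 ->
  same_ordering (p i) x -> same_ordering (p i) x1 -> same_ordering (p i) x2 ->
  (forall j, x j = c * x1 j + (1 - c) * x2 j) -> 0 <= c <= 1 ->
  Rmin (ratio J (replace_agent p i x1)) (ratio J (replace_agent p i x2))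
  <= ratio J (replace_agent p i x).
Proof.
move=> Hp Ux U1 U2 Sx S1 S2 Hx Hc.
have V1 := @repl_V p i x1 Hp U1; have V2 := @repl_V p i x2 Hp U2; have Vx := @repl_V p i x Hp Ux.
have W1p := opt_pos _ i V1; have W2p := opt_pos _ i V2; have Wxp := opt_pos _ i Vx.
have L1p := exp_ge0 _ V1; have L2p := exp_ge0 _ V2.
have Hw : forall mu, welfare (replace_agent p i x) mu =
   c * welfare (replace_agent p i x1) mu + (1 - c) * welfare (replace_agent p i x2) mu.
  move=> mu; rewrite /welfare -sum_lin; apply: eq_bigr => k _.
  rewrite /replace_agent; case: (k == i); [apply: Hx | ring].
have HL : exp_welfare J (replace_agent p i x) =
   c * exp_welfare J (replace_agent p i x1) + (1 - c) * exp_welfare J (replace_agent p i x2).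
  rewrite /exp_welfare (Hord p i x Hp Ux Sx) (Hord p i x1 Hp U1 S1) (Hord p i x2 Hp U2 S2) -sum_lin.
  apply: eq_bigr => mu _; rewrite Hw; ring.
have HW : opt_welfare (replace_agent p i x) <=
   c * opt_welfare (replace_agent p i x1) + (1 - c) * opt_welfare (replace_agent p i x2).
  apply: max_le; first nra.
  move=> mu; rewrite Hw.
  have := le_opt (replace_agent p i x1) mu.
  have := le_opt (replace_agent p i x2) mu.
  nra.
rewrite /ratio HL.
set L1 := exp_welfare J (replace_agent p i x1) in HL L1p *.
set L2 := exp_welfare J (replace_agent p i x2) in HL L2p *.
set W1 := opt_welfare (replace_agent p i x1) in HW W1p *.
set W2 := opt_welfare (replace_agent p i x2) in HW W2p *.
set W := opt_welfare (replace_agent p i x) in HW Wxp *.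
set r := Rmin (L1 / W1) (L2 / W2).
have r1 : r <= L1 / W1 by apply: Rmin_l.
have r2 : r <= L2 / W2 by apply: Rmin_r.
have r0 : 0 <= r.
  apply: Rmin_glb; apply: Rle_mult_inv_pos => //.
have e1 : r * W1 <= L1.
  have := Rmult_le_compat_r W1 _ _ (Rlt_le _ _ W1p) r1.
  by rewrite /Rdiv Rmult_assoc Rinv_l ?Rmult_1_r; [|lra].
have e2 : r * W2 <= L2.
  have := Rmult_le_compat_r W2 _ _ (Rlt_le _ _ W2p) r2.
  by rewrite /Rdiv Rmult_assoc Rinv_l ?Rmult_1_r; [|lra].
have e : r * W <= c * L1 + (1 - c) * L2 by nra.
apply: (Rmult_le_reg_r W) => //.
rewrite /Rdiv Rmult_assoc Rinv_l ?Rmult_1_r //; lra.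
Qed.

Definition xf (u0 phi : valuation n) (d : R) : valuation n :=
  fun j => (1 - d) * phi j + d * u0 j.

Definition phi_ok (u0 phi : valuation n) : Prop :=
  (forall j, 0 <= phi j <= 1) /\
  (forall j k, u0 j < u0 k -> phi j <= phi k) /\
  (forall j, u0 j = 1 -> phi j = 1) /\
  (forall j, u0 j = 0 -> phi j = 0).

Lemma xf_props u0 phi d : unit_range u0 -> 0 < d < 1 -> phi_ok u0 phi ->
  unit_range (xf u0 phi d) /\ same_ordering u0 (xf u0 phi d).
Proof.
move=> [Hinj [[t Ht] [Hle [[b Hb] Hge]]]] Hd [Hr [Hm [Ht1 Hb0]]].
have Hs : forall j k, u0 j < u0 k -> xf u0 phi d j < xf u0 phi d k.
  move=> j k Hjk; rewrite /xf; have := Hm _ _ Hjk; nra.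
have So : same_ordering u0 (xf u0 phi d).
  move=> j k; split; first exact: Hs.
  move=> Hx; case: (total_order_T (u0 j) (u0 k)) => [[H|H]|H] //.
  - have E := Hinj _ _ H; rewrite E in Hx; lra.
  - have := Hs _ _ H; lra.
split=> //; split.
- move=> j k Hx; case: (total_order_T (u0 j) (u0 k)) => [[H|H]|H].
  + have := Hs _ _ H; lra.
  + exact: Hinj.
  + have := Hs _ _ H; lra.
split; first by exists t; rewrite /xf Ht (Ht1 _ Ht); ring.
split; first by move=> j; rewrite /xf; have := Hr j; have := Hle j; nra.
split; first by exists b; rewrite /xf Hb (Hb0 _ Hb); ring.
by move=> j; rewrite /xf; have := Hr j; have := Hge j; nra.
Qed.

Arguments xf_props {u0 phi d}.

Lemma inner (p : profile n) i d eps : in_Vn p -> 0 < d < 1 -> d < eps ->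
  forall N (M : {set 'I_n}) phi, (#|M| <= N)%N ->
  (forall j, 0 < phi j < 1 -> j \in M) -> phi_ok (p i) phi ->
  exists v, quasi_comb eps v /\
    ratio J (replace_agent p i v) <= ratio J (replace_agent p i (xf (p i) phi d)).
Proof.
move=> Hp Hd Heps N; elim: N => [|N IH] M phi HN HM Hphi.
all: case: (classic (exists k, 0 < phi k < 1)) => [[k Hk]|Hno].
2,4: exists (xf (p i) phi d); split; last by apply: Rle_refl.
2,3: have [U _] := xf_props (Hp i) Hd Hphi; split=> // j;
     case: Hphi => [Hr _]; have := Hr j; case: (Hp i) => _ [_ [Hle [_ Hge]]];
     have := Hle j; have := Hge j;
     case: (Rle_lt_dec (phi j) 0) => H0; [| case: (Rlt_le_dec (phi j) 1) => H1];
     [ move=> *; left; rewrite /xf; nra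
     | move=> *; exfalso; apply: Hno; exists j; lra
     | move=> *; right; rewrite /xf; nra ].
- have := HM k Hk; move: HN; rewrite leqn0 cards_eq0 => /eqP ->; by rewrite inE.
have Mk := HM k Hk.
have HN' : (#|M :\ k| <= N)%N by move: HN; rewrite (cardsD1 k M) Mk.
set c := phi k.
have Hc : 0 < c < 1 by [].
set ic := / c. set jc := / (1 - c).
have Hic : c * ic = 1 by rewrite /ic; field; lra.
have Hjc : (1 - c) * jc = 1 by rewrite /jc; field; lra.
have ic0 : 0 < ic by apply: Rinv_0_lt_compat; lra.
have jc0 : 0 < jc by apply: Rinv_0_lt_compat; lra.
pose phi1 := fun j => if Rle_dec (phi j) c then phi j * ic else 1.
pose phi2 := fun j => if Rle_dec (phi j) c then 0 else (phi j - c) * jc.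
case: Hphi => [Hr [Hm [Ht1 Hb0]]].
have Hdec : forall j, phi j = c * phi1 j + (1 - c) * phi2 j.
  move=> j; rewrite /phi1 /phi2; case: Rle_dec => H /=; nra.
have Hok1 : phi_ok (p i) phi1.
  rewrite /phi1; split; [|split; [|split]].
  - move=> j; case: Rle_dec => H /=; have := Hr j; nra.
  - move=> j j' H; have := Hm _ _ H.
    case: Rle_dec => H1 /=; case: Rle_dec => H2 /=; have := Hr j; have := Hr j'; nra.
  - move=> j H; rewrite (Ht1 _ H); case: Rle_dec =>  /=//; lra.
  - move=> j H; rewrite (Hb0 _ H); case: Rle_dec => H1 /=; lra.
have Hok2 : phi_ok (p i) phi2.
  rewrite /phi2; split; [|split; [|split]].
  - move=> j; case: Rle_dec => H /=; have := Hr j; nra.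
  - move=> j j' H; have := Hm _ _ H.
    case: Rle_dec => H1 /=; case: Rle_dec => H2 /=; have := Hr j; have := Hr j'; nra.
  - move=> j H; rewrite (Ht1 _ H); case: Rle_dec => H1 /=; [lra|]; nra.
  - move=> j H; rewrite (Hb0 _ H); case: Rle_dec => H1 /=; lra.
have HM1 : forall j, 0 < phi1 j < 1 -> j \in M :\ k.
  move=> j; rewrite /phi1; case: Rle_dec => H /= Hj; last lra.
  have Hj' : 0 < phi j < 1 by nra.
  rewrite in_setD1 (HM _ Hj') andbT; apply/eqP => E; subst j.
  rewrite -/c in Hj; nra.
have HM2 : forall j, 0 < phi2 j < 1 -> j \in M :\ k.
  move=> j; rewrite /phi2; case: Rle_dec => H /= Hj; first lra.
  have Hj' : 0 < phi j < 1 by have := Hr j; nra.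
  rewrite in_setD1 (HM _ Hj') andbT; apply/eqP => E; subst j.
  rewrite -/c in H; lra.
have [v1 [Q1 R1]] := IH _ _ HN' HM1 Hok1.
have [v2 [Q2 R2]] := IH _ _ HN' HM2 Hok2.
have [U S] := xf_props (Hp i) Hd (conj Hr (conj Hm (conj Ht1 Hb0))).
have [U1 S1] := xf_props (Hp i) Hd Hok1.
have [U2 S2] := xf_props (Hp i) Hd Hok2.
have Hst := @qc_step p i _ _ _ c Hp U U1 U2 S S1 S2.
have Hmin : Rmin (ratio J (replace_agent p i (xf (p i) phi1 d)))
       (ratio J (replace_agent p i (xf (p i) phi2 d))) <=
     ratio J (replace_agent p i (xf (p i) phi d)).
  apply: Hst; last lra.
  move=> j; rewrite /xf (Hdec j); ring.
move: Hmin; rewrite /Rmin; case: Rle_dec => _ Hmin.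
- exists v1; split=> //; lra.
- exists v2; split=> //; lra.
Qed.

Lemma outer eps : 0 < eps -> forall p, in_Vn p ->
  exists q, in_Cn eps q /\ ratio J q <= ratio J p.
Proof.
move=> He.
set d := Rmin eps 1 / 2.
have Hd : 0 < d < 1.
  rewrite /d; have := Rmin_r eps 1; have : 0 < Rmin eps 1 by apply: Rmin_glb_lt; lra.
  lra.
have Hde : d < eps.
  rewrite /d; have := Rmin_l eps 1; have : 0 < Rmin eps 1 by apply: Rmin_glb_lt; lra.
  lra.
have Q : forall k, forall p, in_Vn p ->
    (forall i : 'I_n, (k <= i)%N -> quasi_comb eps (p i)) ->
    exists q, in_Cn eps q /\ ratio J q <= ratio J p.
  elim=> [|k IH] p Hp Hq.
    exists p; split; last by apply: Rle_refl.
    by move=> i; apply: Hq.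
  case: (ltnP k n) => Hk.
  - pose i := Ordinal Hk.
    have Hok : phi_ok (p i) (p i).
      case: (Hp i) => _ [_ [Hle [_ Hge]]].
      split; [move=> j; split; [apply: Hge|apply: Hle]|split; [|split]].
      + move=> j j' H; lra.
      + by [].
      + by [].
    have [v [Qv Rv]] := @inner p i d eps Hp Hd Hde _ _ _ (leqnn #|[set: 'I_n]|)
      (fun j _ => in_setT j) Hok.
    have E : replace_agent p i (xf (p i) (p i) d) = p.
      apply: functional_extensionality => k'; rewrite /replace_agent.
      case: eqP => [->|//]; apply: functional_extensionality => j; rewrite /xf; ring.
    rewrite E in Rv.
    have Vp' : in_Vn (replace_agent p i v) by apply: repl_V => //; case: Qv.
    have Hq' : forall j : 'I_n, (k <= j)%N -> quasi_comb eps (replace_agent p i v j).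
      move=> j Hj; rewrite /replace_agent; case: eqP => [//|Hne].
    apply: Hq; rewrite ltn_neqAle Hj andbT; apply/eqP => E'; apply: Hne.
    by apply: val_inj; rewrite /= -E'.
    have [q [Cq Rq]] := IH _ Vp' Hq'.
    exists q; split => //; lra.
  - apply: IH => // i Hi; exfalso.
    have := ltn_ord i; have := leq_trans Hk Hi; by rewrite leqNgt => /negbTE ->.
move=> p Hp; apply: (Q n p Hp) => i Hi; exfalso.
by have := ltn_ord i; rewrite ltnNge Hi.
Qed.
End Main.

Theorem lemma3 (n : nat) (J : mechanism n) (eps : R) :
  randomized_mechanism J -> ordinal_mech J -> anonymous_mech J ->
  neutral_mech J -> 0 < eps ->
  forall m : R,
    is_ar J m <->
    is_inf (fun r => exists p, in_Cn eps p /\ r = ratio J p) m.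
Proof.
move=> HJ Hord _ _ He m.
have CV : forall p : profile n, in_Cn eps p -> in_Vn p by move=> p H i; case: (H i).
rewrite /is_ar /is_inf; split.
- move=> [H1 H2]; split.
  + move=> x [p [Hp ->]]; apply: H1; exists p; split => //; exact: CV.
  + move=> b Hb; apply: H2 => x [p [Hp ->]].
    have [q [Cq Rq]] := @outer n J HJ Hord eps He p Hp.
    apply: Rle_trans Rq; apply: Hb; by exists q.
- move=> [H1 H2]; split.
  + move=> x [p [Hp ->]].
    have [q [Cq Rq]] := @outer n J HJ Hord eps He p Hp.
    apply: Rle_trans Rq; apply: H1; by exists q.
  + move=> b Hb; apply: H2 => x [p [Hp ->]]; apply: Hb; exists p; split => //; exact: CV.
Qed.
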